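(* Let $\varphi$ be a normal form $\mathrm{GF}^2{+}\mathrm{EG}$ sentence whose equivalence symbols are $E_1,\dots,E_k$, let $\bar\Theta=(\Theta^{E_1},\dots,\Theta^{E_k})$ be a tuple of sets of $M_\varphi$-counting types, let $\theta\in\Theta^{E_i}$ for some $i$, and let $\Gamma_{\bar\Theta}(\theta)$ be the system of linear (in)equalities defined in the context. The following are equivalent: (i) $\Gamma_{\bar\Theta}(\theta)$ has a non-negative integer solution; (ii) $\Gamma_{\bar\Theta}(\theta)$ has a non-negative rational solution; (iii) $\Gamma_{\bar\Theta}(\theta)$ has a non-negative integer solution in which at most $m$ unknowns are non-zero and all values are bounded by $m(m\cdot M_\varphi)^{2m+1}$, where $m$ is the number of (in)equalities in $\Gamma_{\bar\Theta}(\theta)$.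
   Context: $\mathrm{GF}^2{+}\mathrm{EG}$ is the two-variable guarded fragment in which the distinguished binary symbols $E_1,\dots,E_k$ occur only in guards and are interpreted as equivalences; $\varphi$ is in normal form (a conjunction of conjuncts of quantifier depth at most two of the usual Scott-type shapes). $\mathcal{A}_\varphi$ is the set of atomic 1-types over the signature of $\varphi$ (maximal consistent sets of atoms and negated atoms in the variable $x$), $|\varphi|$ is the length of $\varphi$, and $M_\varphi=3|\mathcal{A}_\varphi||\varphi|^3$. An $M_\varphi$-counting type is a function $\theta:\mathcal{A}_\varphi\to\{0,1,\dots,M_\varphi\}$; a 1-type $\alpha$ appears in it if $\theta(\alpha)>0$. $\alpha$ appears in $\Theta^{E_i}$ if it appears in some element of $\Theta^{E_i}$; $\mathcal{A}_{\bar\Theta}$ is the set of 1-types appearing in some $\Theta^{E_i}$. $\alpha$ is royal for $E_i$-classes if $\alpha$ appears in $\Theta^{E_i}$ and $\theta'(\alpha)<M_\varphi$ for every $\theta'\in\Theta^{E_i}$. The system $\Gamma_{\bar\Theta}(\theta)$ has unknowns $X^{E_j}_{\theta'}$ for $1\le j\le k$, $\theta'\in\Theta^{E_j}$, and $Y^{E_j}_\alpha$ for $1\le j\le k$, $\alpha\in\mathcal{A}_{\bar\Theta}$. For every $\alpha\in\mathcal{A}_{\bar\Theta}$ and every $j$ it contains: (E0) $Y^{E_j}_\alpha=\sum_{\theta'\in\Theta^{E_j}}\theta'(\alpha)X^{E_j}_{\theta'}$; (E1a) if $\alpha$ is royal for $E_j$-classes, $Y^{E_j}_\alpha\ge1$;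 (E1b) if $\alpha$ is not royal for $E_j$-classes, $\sum_{\theta'\in\Theta^{E_j},\,\theta'(\alpha)=M_\varphi}X^{E_j}_{\theta'}\ge1$; (E2) if $\alpha$ is royal for $E_j$-classes, $Y^{E_j}_\alpha\ge Y^{E_l}_\alpha$ for every $l\ne j$. Additionally it contains (E3) $X^{E_i}_\theta\ge1$ for the distinguished $\theta\in\Theta^{E_i}$. *)

(* Defs.v *)
From Stdlib Require List.
From HB Require Import structures.
From mathcomp Require Import all_boot all_order all_algebra.
Set Implicit Arguments. Unset Strict Implicit. Unset Printing Implicit Defensive.
Import Order.TTheory GRing.Theory Num.Theory.

(* Abstraction of the data of a normal-form GF^2+EG sentence phi that the
   system Gamma depends on:
     A    : the finite type of atomic 1-types  (A_phi),
     len  : the length |phi| of phi,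
     k    : the number of equivalence symbols E_1..E_k (indexed by 'I_k). *)

Section Gamma.
Variables (A : finType) (len k : nat).

Definition Mphi : nat := 3 * #|A| * len ^ 3.

Definition ctype : finType := {ffun A -> 'I_(Mphi.+1)}.

Variable Theta : 'I_k -> {set ctype}.

Definition appears_in (a : A) (t : ctype) : bool := 0 < t a.
Definition appears (j : 'I_k) (a : A) : bool := [exists t in Theta j, appears_in a t].
Definition ATheta : {set A} := [set a | [exists j, appears j a]].
Definition royal (j : 'I_k) (a : A) : bool :=
  appears j a && [forall t in Theta j, (t a < Mphi)%N].

Inductive constr :=
| CE0 of 'I_k & A          (* Y^{E_j}_a = sum_t t(a) X^{E_j}_t *)
| CE1a of 'I_k & A         (* Y^{E_j}_a >= 1 *)
| CE1b of 'I_k & A         (* sum_{t, t(a)=M} X^{E_j}_t >= 1 *)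
| CE2 of 'I_k & 'I_k & A   (* CE2 j l a : Y^{E_j}_a >= Y^{E_l}_a *)
| CE3.                     (* X^{E_i}_theta >= 1 *)

Definition Gamma : seq constr :=
  flatten [seq flatten [seq
      [:: CE0 j a; if royal j a then CE1a j a else CE1b j a] ++
      (if royal j a then [seq CE2 j l a | l <- enum 'I_k & l != j] else [::])
    | j <- enum 'I_k] | a <- enum ATheta] ++ [:: CE3].

(* Semantics of a constraint under a valuation of the unknowns
   X^{E_j}_t := X j t  and  Y^{E_j}_a := Y j a, in a number domain R. *)
Definition holds (R : numDomainType) (i : 'I_k) (theta : ctype)
    (X : 'I_k -> ctype -> R) (Y : 'I_k -> A -> R) (c : constr) : Prop :=
  match c with
  | CE0 j a => Y j a = \sum_(t in Theta j) (nat_of_ord (t a))%:R * X j t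
  | CE1a j a => 1 <= Y j a
  | CE1b j a => 1 <= \sum_(t in Theta j | nat_of_ord (t a) == Mphi) X j t
  | CE2 j l a => Y l a <= Y j a
  | CE3 => 1 <= X i theta
  end%R.

Definition solves (R : numDomainType) (i : 'I_k) (theta : ctype)
    (X : 'I_k -> ctype -> R) (Y : 'I_k -> A -> R) : Prop :=
  forall c, List.In c Gamma -> holds i theta X Y c.

Definition nonzero_unknowns (X : 'I_k -> ctype -> nat) (Y : 'I_k -> A -> nat) : nat :=
  #|[set p : 'I_k * ctype | (p.2 \in Theta p.1) && (X p.1 p.2 != 0%N)]| +
  #|[set p : 'I_k * A | (p.2 \in ATheta) && (Y p.1 p.2 != 0%N)]|.

End Gamma.

(* Main.v *)
Require Import Defs.
From HB Require Import structures.
From mathcomp Require Import all_boot all_order all_algebra all_fingroup.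
From mathcomp Require Import ring lra zify.
From Stdlib Require Import Classical_Prop.
Set Implicit Arguments. Unset Strict Implicit. Unset Printing Implicit Defensive.
Import Order.TTheory GRing.Theory Num.Theory.
Local Open Scope ring_scope.

Lemma det_bound n (A : 'M[int]_n) (M : int) :
  0 <= M -> (forall i j, `|A i j| <= M) -> `|\det A| <= (n`!)%:R * M ^+ n.
Proof.
move=> M0 hA.
rewrite /determinant.
apply: le_trans (ler_norm_sum _ _ _) _.
have -> : (n`!)%:R * M ^+ n = \sum_(s : 'S_n) M ^+ n.
  by rewrite sumr_const card_Sn mulr_natl.
apply: ler_sum => s _.
rewrite normrM normrX normrN normr1 expr1n mul1r normr_prod.
have -> : M ^+ n = \prod_(i < n) M by rewrite prodr_const card_ord.
apply: ler_prod => i _; by rewrite normr_ge0 hA.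
Qed.

Notation ir := (fun x : int => (x%:~R : rat)).

Lemma cramer (r s : nat) (Bz : 'M[int]_(r, s)) (bz : 'cV[int]_r) (x : 'cV[rat]_s) (M : int) :
  r = s -> 0 <= M -> row_free (map_mx ir Bz) -> map_mx ir Bz *m x = map_mx ir bz ->
  (forall i j, `|Bz i j| <= M) -> (forall i, `|bz i 0| <= 1) ->
  exists D : int, 0 < D /\ forall j, exists w : int,
    ir w = ir D * x j 0 /\ `|w| <= (s * (s.-1)`!)%:R * M ^+ s.-1.
Proof.
move=> e; subst r => M0 hfree hx hB hb.
have hdet : \det Bz != 0.
  move: hfree; rewrite row_free_unit unitmxE unitfE det_map_mx.
  by rewrite intr_eq0.
exists `|\det Bz|; split; first by rewrite normr_gt0.
have key : (\det (map_mx ir Bz))%:M *m x = map_mx ir (\adj Bz *m bz).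
  by rewrite -mul_adj_mx -mulmxA hx map_mxM map_mx_adj.
move=> j.
exists (Num.sg (\det Bz) * (\adj Bz *m bz) j 0); split.
  have := congr1 (fun X : 'cV[rat]_s => X j 0) key.
  rewrite mul_scalar_mx !mxE det_map_mx /= => H.
  rewrite [LHS]intrM -H normrEsg [in RHS]intrM; ring.
rewrite normrM normr_sg hdet mul1r mxE.
apply: le_trans (ler_norm_sum _ _ _) _.
have -> : (s * (s.-1)`!)%:R * M ^+ s.-1 = \sum_(k < s) ((s.-1)`!)%:R * M ^+ s.-1.
  by rewrite sumr_const card_ord natrM -mulrA mulr_natl.
apply: ler_sum => k _.
rewrite normrM.
have h1 : `|bz k 0| <= 1 := hb k.
have h2 : `|\adj Bz j k| <= ((s.-1)`!)%:R * M ^+ s.-1.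
  rewrite mxE /cofactor normrM normrX normrN normr1 expr1n mul1r.
  apply: det_bound => // i i'; rewrite !mxE; exact: hB.
rewrite -[X in _ <= X]mulr1.
apply: ler_pM => //.
Qed.

Section LP.
Variables (V : finType) (m : nat) (C : 'I_m -> V -> int) (b : 'I_m -> int) (eqk : 'I_m -> bool).

Definition lhs (z : V -> rat) r : rat := \sum_v ir (C r v) * z v.
Definition feas (z : V -> rat) := (forall v, 0 <= z v) /\
  (forall r, if eqk r then lhs z r = ir (b r) else ir (b r) <= lhs z r).
Definition supp (z : V -> rat) := [set v | z v != 0].
Definition loose (z : V -> rat) := [set r | lhs z r != ir (b r)].
Definition indep (z : V -> rat) := forall d : V -> rat,
  (forall v, z v = 0 -> d v = 0) -> (forall r, lhs z r = ir (b r) -> lhs d r = 0) ->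
  forall v, d v = 0.

Lemma lhs_lin z d l r : lhs (fun v => z v + l * d v) r = lhs z r + l * lhs d r.
Proof.
rewrite /lhs mulr_sumr -big_split /=; apply: eq_bigr => v _.
by rewrite mulrDr mulrCA.
Qed.

Lemma lhs_opp d r : lhs (fun v => - d v) r = - lhs d r.
Proof.
rewrite /lhs -sumrN; apply: eq_bigr => v _; by rewrite mulrN.
Qed.

Definition meas z := (#|supp z| + #|loose z|)%N.

Lemma step z d v0 : feas z -> (forall v, z v = 0 -> d v = 0) ->
  (forall r, lhs z r = ir (b r) -> lhs d r = 0) -> d v0 < 0 ->
  exists z', feas z' /\ (meas z' < meas z)%N.
Proof.
move=> [z0 zr] hd1 hd2 hv0.
pose P (c : (V + 'I_m)%type) : bool := match c with
  | inl v => d v < 0 | inr r => (lhs z r != ir (b r)) && (lhs d r < 0) end.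
pose F (c : (V + 'I_m)%type) : rat := match c with
  | inl v => z v / - d v | inr r => (lhs z r - ir (b r)) / - lhs d r end.
have slack r : lhs z r != ir (b r) -> 0 <= lhs z r - ir (b r).
  move=> hr; have := zr r; case: (eqk r) => [h|h]; first by rewrite h eqxx in hr.
  by rewrite subr_ge0.
have F0 c : P c -> 0 <= F c.
  case: c => [v|r] /=; first by move=> hv; rewrite divr_ge0 // oppr_ge0 ltW.
  by case/andP => h1 h2; rewrite divr_ge0 ?slack // oppr_ge0 ltW.
case: (@arg_minP _ _ _ (inl v0) P F hv0) => c Pc Hmin.
set l := F c.
have l0 : 0 <= l := F0 c Pc.
pose z' := fun v => z v + l * d v.
have tight_keep r : lhs z r = ir (b r) -> lhs z' r = ir (b r).
  by move=> h; rewrite /z' lhs_lin h hd2 // mulr0 addr0.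
have supp_sub : supp z' \subset supp z.
  apply/subsetP => v; rewrite !inE /z'; apply: contraNN => /eqP h.
  by rewrite h (hd1 v h) mulr0 addr0.
have loose_sub : loose z' \subset loose z.
  apply/subsetP => r; rewrite !inE; apply: contraNN => /eqP h.
  by rewrite tight_keep.
have fz' : feas z'.
  split.
    move=> v; rewrite /z'.
    case: (ltrP (d v) 0) => hv.
      have := Hmin (inl v) hv; rewrite /= -/l.
      rewrite ler_pdivlMr ?oppr_gt0 // mulrN => h.
      by rewrite -(opprK (l * d v)) subr_ge0.
    by rewrite addr_ge0 // mulr_ge0.
  move=> r; case hr: (eqk r).
    by apply: tight_keep; have := zr r; rewrite hr.
  case: (lhs z r =P ir (b r)) => [/tight_keep -> //|/eqP hl].
  rewrite /z' lhs_lin.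
  case: (ltrP (lhs d r) 0) => hd.
    have := Hmin (inr r); rewrite /= hl hd => /(_ isT).
    rewrite -/l ler_pdivlMr ?oppr_gt0 // mulrN => h.
    by rewrite -subr_ge0 addrAC -(opprK (l * lhs d r)) subr_ge0.
  have := zr r; rewrite hr => h.
  by apply: le_trans h _; rewrite lerDl mulr_ge0.
exists z'; split => //.
rewrite /meas.
have lE : l = F c by [].
clearbody l.
case: c Pc Hmin lE => [v|r] /= Pc Hmin lE.
  have hp : supp z' \proper supp z.
    apply/properP; split => //; exists v.
      by rewrite inE; apply/eqP => h; move: Pc; rewrite (hd1 v h) ltxx.
    rewrite inE negbK /z' lE; apply/eqP.
    by field; rewrite ltr0_neq0.
  have := proper_card hp; have := subset_leq_card loose_sub.
  move=> h1 h2; rewrite -addSn leq_add //.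
have hp : loose z' \proper loose z.
  apply/properP; split => //; exists r.
    by rewrite inE; case/andP: Pc.
  case/andP: Pc => h1 h2.
  rewrite inE negbK /z' lhs_lin lE; apply/eqP.
  by field; rewrite ltr0_neq0.
have := proper_card hp; have := subset_leq_card supp_sub.
move=> h1 h2; rewrite -addnS leq_add //.
Qed.

Lemma exists_indep z : feas z -> exists z', feas z' /\ indep z'.
Proof.
have H : forall n z, (meas z <= n)%N -> feas z -> exists z', feas z' /\ indep z'.
  elim=> [|n IH] z1 hz fz;
  case: (classic (exists z', feas z' /\ (meas z' < meas z1)%N)) => [[z' [f' h']]|nz].
  - by move: (leq_trans h' hz).
  - exists z1; split => // d hd1 hd2 v.
    case: (ltrgtP (d v) 0) => h //; exfalso; apply: nz.
      exact: (step fz hd1 hd2 h).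
    apply: (@step z1 (fun v => - d v) v fz).
    + by move=> w /hd1 ->; rewrite oppr0.
    + by move=> r /hd2 h0; rewrite lhs_opp h0 oppr0.
    + by rewrite oppr_lt0.
  - apply: (IH z') => //; rewrite -ltnS; exact: leq_trans h' hz.
  - exists z1; split => // d hd1 hd2 v.
    case: (ltrgtP (d v) 0) => h //; exfalso; apply: nz.
      exact: (step fz hd1 hd2 h).
    apply: (@step z1 (fun v => - d v) v fz).
    + by move=> w /hd1 ->; rewrite oppr0.
    + by move=> r /hd2 h0; rewrite lhs_opp h0 oppr0.
    + by rewrite oppr_lt0.
by move=> fz; apply: (H (meas z)).
Qed.

Lemma indep_int (M : nat) z : (forall r v, `|C r v| <= M%:Z) ->
  (forall r, 0 <= b r <= 1) -> (forall r, eqk r -> b r = 0) -> feas z -> indep z ->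
  exists (w : V -> nat) (s : nat), (s <= m)%N /\ feas (fun v => (w v)%:R) /\
   (#|[set v | w v != 0%N]| <= s)%N /\ forall v, (w v <= s * (s.-1)`! * M ^ s.-1)%N.
Proof.
move=> hC hb heq fz hind.
set S := supp z.
pose ev := fun i : 'I_#|S| => (enum_val i : V).
pose Gz : 'M[int]_(m, #|S|) := \matrix_(r, i) (if lhs z r == ir (b r) then C r (ev i) else 0).
pose bz : 'cV[int]_m := \col_r (if lhs z r == ir (b r) then b r else 0).
pose xS : 'cV[rat]_#|S| := \col_i z (ev i).
have zS v : v \notin S -> z v = 0 by rewrite inE negbK => /eqP.
have evS i : ev i \in S := enum_valP i.
have sumS (F : V -> rat) : (forall v, z v = 0 -> F v = 0) ->
    \sum_v F v = \sum_(i < #|S|) F (ev i).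
  move=> hF; rewrite (bigID (mem S)) /= [X in _ + X]big1 ?addr0; last first.
    by move=> v /zS /hF.
  by rewrite big_enum_val.
have hGx : map_mx ir Gz *m xS = map_mx ir bz.
  apply/matrixP => r j; rewrite !mxE.
  under eq_bigr do rewrite !mxE.
  case ht: (lhs z r == ir (b r)).
    rewrite -(eqP ht) /lhs (sumS (fun v => ir (C r v) * z v)) //.
    by move=> v ->; rewrite mulr0.
  by rewrite big1 // => i _; rewrite mul0r.
have hfree : row_free (map_mx ir Gz)^T.
  rewrite -kermx_eq0; apply/rowV0P => u /sub_kermxP hu.
  pose d := fun v => \sum_(i < #|S|) (if ev i == v then u 0 i else 0).
  have dev i : d (ev i) = u 0 i.
    rewrite /d (bigD1 i) //= eqxx big1 ?addr0 // => i' hi'.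
    by rewrite (inj_eq enum_val_inj) (negbTE hi').
  have hd := hind d.
  apply/rowP => i; rewrite mxE -dev hd //.
    move=> v hv; rewrite /d big1 // => i' _; case: eqP => // hev.
    by have := evS i'; rewrite hev inE hv eqxx.
  move=> r hr.
  have : (u *m (map_mx ir Gz)^T) 0 r = 0 by rewrite hu mxE.
  rewrite mxE => <-.
  rewrite /lhs; under eq_bigr do rewrite mulr_sumr.
  rewrite exchange_big; apply: eq_bigr => k _.
  rewrite !mxE.
  have -> : (lhs z r == ir (b r)) = true by apply/eqP.
  rewrite (bigD1 (ev k)) // eqxx big1 /=; first by rewrite addr0 mulrC.
  move=> v hv.
  by rewrite eq_sym (negbTE hv) mulr0.
have hrank : \rank (map_mx ir Gz) = #|S|.
  by rewrite -mxrank_tr; apply/eqP.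
pose f := maxrankfun (map_mx ir Gz).
pose Bz := rowsub f Gz.
have hB : map_mx ir Bz = rowsub f (map_mx ir Gz) by apply/matrixP => i j; rewrite !mxE.
have hfreeB : row_free (map_mx ir Bz) by rewrite hB maxrowsub_free.
have hBx : map_mx ir Bz *m xS = map_mx ir (rowsub f bz).
  apply/matrixP => i j; have := congr1 (fun X : 'cV[rat]_m => X (f i) j) hGx.
  by rewrite !mxE => <-; apply: eq_bigr => k _; rewrite !mxE.
have hM0 : 0 <= M%:Z by [].
have hBb : forall i j, `|Bz i j| <= M%:Z.
  move=> i j; rewrite !mxE; case: ifP => _ //; exact: hC.
have hbb : forall i, `|rowsub f bz i 0| <= 1.
  move=> i; rewrite !mxE; case: ifP => _ //.
  by case/andP: (hb (f i)) => h1 h2; rewrite ger0_norm.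
have [D [D0 hD]] := @cramer _ _ Bz (rowsub f bz) xS M%:Z hrank hM0 hfreeB hBx hBb hbb.
have hw v : exists n : nat, (n%:R == ir D * z v) &&
    (n <= #|S| * (#|S|.-1)`! * M ^ #|S|.-1)%N.
  case: (boolP (v \in S)) => hv; last first.
    by exists 0%N; rewrite zS // mulr0 eqxx leq0n.
  have [w [hw1 hw2]] := hD (enum_rank_in hv v).
  move: hw1; rewrite !mxE /ev enum_rankK_in // => hw1.
  have w0 : 0 <= w.
    rewrite -(ler0z rat) hw1 mulr_ge0 //; last by case: fz.
    by rewrite ler0z ltW.
  exists `|w|%N; apply/andP; split.
    by rewrite natr_absz ger0_norm // hw1.
  rewrite -lez_nat abszE; apply: le_trans hw2 _.
  by rewrite -[Posz M]natz -natrX -natrM natz.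
pose w v := xchoose (hw v).
have hwE v : (w v)%:R = ir D * z v by have /andP[/eqP] := xchooseP (hw v).
have hwB v : (w v <= #|S| * (#|S|.-1)`! * M ^ #|S|.-1)%N.
  by have /andP[_] := xchooseP (hw v).
exists w, #|S|; split; first by rewrite -hrank rank_leq_row.
split; last split; last by [].
  split; first by move=> v; rewrite ler0n.
  move=> r.
  have lw : lhs (fun v => (w v)%:R) r = ir D * lhs z r.
    by rewrite /lhs mulr_sumr; apply: eq_bigr => v _; rewrite hwE mulrCA.
  have := fz.2 r; case hk: (eqk r) => h; rewrite lw.
    by rewrite h (heq r hk) mulr0.
  have b0 : 0 <= ir (b r) by rewrite ler0z; case/andP: (hb r).
  have l0 := le_trans b0 h.
  apply: (le_trans h); apply: ler_peMl => //.
  by rewrite ler1z.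
apply: subset_leq_card; apply/subsetP => v; rewrite !inE; apply: contraNN => /eqP h.
by rewrite -(eqr_nat rat) hwE h mulr0.
Qed.
End LP.

Section Enc.
Variables (A : finType) (len k : nat) (Theta : 'I_k -> {set ctype A len}).
Variables (i : 'I_k) (theta : ctype A len).
Definition Var := (('I_k * ctype A len) + ('I_k * A))%type.
Definition ind (b : bool) : int := if b then 1 else 0.

Definition coef (c : constr A k) (v : Var) : int :=
  match c with
  | CE0 j a => match v with
     | inl p => if p.1 == j then (if p.2 \in Theta j then - ((p.2 a : nat)%:Z) else 0) else 0
     | inr p => ind (p == (j, a)) end
  | CE1a j a => ind (v == inr (j, a))
  | CE1b j a => match v with
     | inl p => if p.1 == j then ind ((p.2 \in Theta j) && (nat_of_ord (p.2 a) == Mphi A len)) else 0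
     | inr _ => 0 end
  | CE2 j l a => ind (v == inr (j, a)) - ind (v == inr (l, a))
  | CE3 => ind (v == inl (i, theta))
  end.
Definition crhs (c : constr A k) : int :=
  match c with CE1a _ _ | CE1b _ _ | CE3 => 1 | _ => 0 end.
Definition ceq (c : constr A k) : bool := if c is CE0 _ _ then true else false.
Definition clhs (c : constr A k) (z : Var -> rat) : rat := \sum_v ir (coef c v) * z v.

Lemma sum_ind (T : finType) (v0 : T) (z : T -> rat) :
  \sum_v ir (ind (v == v0)) * z v = z v0.
Proof.
rewrite (bigD1 v0) //= eqxx big1 /=; first by rewrite addr0 mul1r.
by move=> v /negbTE ->; rewrite mul0r.
Qed.

Lemma sum_pair (T : finType) (j : 'I_k) (G : T -> rat) :
  \sum_(p : 'I_k * T) (if p.1 == j then G p.2 else 0) = \sum_t G t.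
Proof.
rewrite -(pair_big xpredT xpredT (fun x y => if x == j then G y else 0)) /=.
rewrite (bigD1 j) //= [X in _ + X]big1 ?addr0.
  by apply: eq_bigr => t _; rewrite eqxx.
by move=> x /negbTE hx; apply: big1 => t _; rewrite hx.
Qed.

Lemma holds_iff (X : 'I_k -> ctype A len -> rat) (Y : 'I_k -> A -> rat) (z : Var -> rat) c :
  (forall j t, z (inl (j, t)) = X j t) -> (forall j a, z (inr (j, a)) = Y j a) ->
  holds Theta i theta X Y c <->
  (if ceq c then clhs c z = ir (crhs c) else ir (crhs c) <= clhs c z).
Proof.
move=> hX hY; case: c => [j a|j a|j a|j l a|] /=; rewrite /clhs.
- rewrite big_sumType /= sum_ind hY.
  have -> : \sum_(p : 'I_k * ctype A len) ir (if p.1 == j then (if p.2 \in Theta j then - ((p.2 a : nat)%:Z) else 0) else 0) * z (inl p)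
      = - \sum_(t in Theta j) (nat_of_ord (t a))%:R * X j t.
    transitivity (\sum_(p : 'I_k * ctype A len) (if p.1 == j then
        ir (if p.2 \in Theta j then - ((p.2 a : nat)%:Z) else 0) * X j p.2 else 0)).
      apply: eq_bigr => [[x t]] _ /=; case: eqP => [->|_]; last by rewrite mul0r.
      by rewrite hX.
    rewrite (sum_pair j (fun t => ir (if t \in Theta j then - ((t a : nat)%:Z) else 0) * X j t)).
    rewrite -sumrN [in RHS]big_mkcond; apply: eq_bigr => t _; case: ifP => _; last by rewrite mulr0z mul0r.
    by rewrite intrN mulNr.
  rewrite mulr0z addrC; split => [->|h]; first by rewrite subrr.
  by apply/eqP; rewrite -subr_eq0 h.
- by rewrite sum_ind hY.
- rewrite big_sumType /= [X in _ + X]big1 ?addr0; last by move=> p _; rewrite mul0r.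
  transitivity (ir (crhs (CE1b j a)) <= \sum_(p : 'I_k * ctype A len) (if p.1 == j then
        ir (ind ((p.2 \in Theta j) && (nat_of_ord (p.2 a) == Mphi A len))) * X j p.2 else 0)).
    have -> // : \sum_(t in Theta j | nat_of_ord (t a) == Mphi A len) X j t =
       \sum_(p : 'I_k * ctype A len) (if p.1 == j then
        ir (ind ((p.2 \in Theta j) && (nat_of_ord (p.2 a) == Mphi A len))) * X j p.2 else 0).
    rewrite (sum_pair j (fun t => ir (ind ((t \in Theta j) && (nat_of_ord (t a) == Mphi A len))) * X j t)).
    rewrite big_mkcond; apply: eq_bigr => t _ /=; rewrite /ind; case: ifP => _.
      by rewrite mul1r.
    by rewrite mul0r.
  have -> // : \sum_(p : 'I_k * ctype A len) ir (if p.1 == j then ind ((p.2 \in Theta j) && (nat_of_ord (p.2 a) == Mphi A len)) else 0) * z (inl p) =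
       \sum_(p : 'I_k * ctype A len) (if p.1 == j then
        ir (ind ((p.2 \in Theta j) && (nat_of_ord (p.2 a) == Mphi A len))) * X j p.2 else 0).
  apply: eq_bigr => [[x t]] _ /=; case: eqP => [->|_]; last by rewrite mul0r.
  by rewrite hX.
- have -> : \sum_v ir (ind (v == inr (j, a)) - ind (v == inr (l, a))) * z v
      = z (inr (j, a)) - z (inr (l, a)).
    rewrite -!(sum_ind (inr _)) -sumrB; apply: eq_bigr => v _.
    by rewrite intrB mulrBl.
  by rewrite !hY subr_ge0.
- by rewrite sum_ind hX.
Qed.

End Enc.

Lemma size_len (T : Type) (s : seq T) : size s = length s.
Proof. by elim: s => //= x s ->. Qed.

Lemma exp_mono m n e : (m <= n)%N -> (m ^ e <= n ^ e)%N.
Proof. by move=> h; elim: e => // e IH; rewrite !expnS leq_mul. Qed.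

Lemma fact_le n : (n`! <= n ^ n)%N.
Proof.
elim: n => // n IH; rewrite factS expnS leq_mul2l /=.
apply: leq_trans IH _; exact: exp_mono.
Qed.

Lemma bound_mono s m M : (s <= m)%N -> (0 < M)%N -> (0 < m)%N ->
  (s * (s.-1)`! * M ^ s.-1 <= m * (m * M) ^ (2 * m + 1))%N.
Proof.
move=> hsm hM hm.
have h1 : (s * (s.-1)`! <= m ^ m)%N.
  case: s hsm => [|s] hsm //=.
  rewrite -factS; apply: leq_trans (fact_le _) _.
  apply: leq_trans (exp_mono _ hsm) _.
  by rewrite leq_pexp2l.
have h2 : (M ^ s.-1 <= M ^ m)%N.
  by rewrite leq_pexp2l //; apply: leq_trans (leq_pred _) hsm.
apply: leq_trans (leq_mul h1 h2) _.
rewrite -expnMn.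
apply: leq_trans (leq_pexp2l _ _) (leq_pmull _ hm).
  by rewrite muln_gt0 hm hM.
lia.
Qed.

Section Main.
Variables (A : finType) (len k : nat) (Theta : 'I_k -> {set ctype A len}).
Variables (i : 'I_k) (theta : ctype A len).

Definition row (r : nat) : constr A k := List.nth r (Gamma Theta) (@CE3 A k).
Definition Cm (r : 'I_(size (Gamma Theta))) (v : Var A len k) : int := coef Theta i theta (row r) v.
Definition bm (r : 'I_(size (Gamma Theta))) : int := crhs (row r).
Definition em (r : 'I_(size (Gamma Theta))) : bool := ceq (row r).

Lemma solves_iff (X : 'I_k -> ctype A len -> rat) (Y : 'I_k -> A -> rat) (z : Var A len k -> rat) :
  (forall j t, z (inl (j, t)) = X j t) -> (forall j a, z (inr (j, a)) = Y j a) ->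
  solves Theta i theta X Y <->
  forall r, if em r then lhs Cm z r = ir (bm r) else ir (bm r) <= lhs Cm z r.
Proof.
move=> hX hY; split.
  move=> hs r; apply/(holds_iff Theta i theta (row r) hX hY).
  apply: hs; apply: List.nth_In; rewrite -size_len; apply/ssrnat.ltP; exact: ltn_ord.
move=> h c hc; have [n [hn e]] := List.In_nth _ _ (@CE3 A k) hc.
have hn' : (n < size (Gamma Theta))%N by rewrite size_len; apply/ssrnat.ltP.
rewrite -e; apply/(holds_iff Theta i theta _ hX hY).
exact: (h (Ordinal hn')).
Qed.

Lemma coef_bound c v : (0 < Mphi A len)%N -> `|coef Theta i theta c v| <= (Mphi A len)%:Z.
Proof.
move=> hM.
have hind b : `|ind b| <= (Mphi A len)%:Z by case: b; rewrite /ind /= ?normr1 ?normr0 // lez_nat.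
case: c => [j a|j a|j a|j l a|] /=; try exact: hind;
  case: v => [[x t]|p] /=; try exact: hind;
  repeat case: ifP => _; rewrite ?normr0 //; try exact: hind.
- by rewrite normrN lez_nat -ltnS ltn_ord.
- rewrite /ind; do 2 case: ifP => _; rewrite ?subrr ?subr0 ?sub0r ?normrN ?normr1 ?normr0 // lez_nat.
Qed.

End Main.
Arguments Cm {A len k} Theta i theta r v.
Arguments bm {A len k} Theta r.
Arguments em {A len k} Theta r.

Theorem lemma4 (A : finType) (len k : nat)
  (hA : (0 < #|A|)%N) (hlen : (0 < len)%N)
  (Theta : 'I_k -> {set ctype A len}) (i : 'I_k) (theta : ctype A len)
  (htheta : theta \in Theta i) :
  let m := size (Gamma Theta) in
  let bound := (m * (m * Mphi A len) ^ (2 * m + 1))%N in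
  ((exists (X : 'I_k -> ctype A len -> nat) (Y : 'I_k -> A -> nat),
      solves (R := rat) Theta i theta (fun j t => (X j t)%:R) (fun j a => (Y j a)%:R))
   <->
   (exists (X : 'I_k -> ctype A len -> rat) (Y : 'I_k -> A -> rat),
      (forall j t, 0 <= X j t)%R /\ (forall j a, 0 <= Y j a)%R /\
      solves Theta i theta X Y))
  /\
  ((exists (X : 'I_k -> ctype A len -> rat) (Y : 'I_k -> A -> rat),
      (forall j t, 0 <= X j t)%R /\ (forall j a, 0 <= Y j a)%R /\
      solves Theta i theta X Y)
   <->
   (exists (X : 'I_k -> ctype A len -> nat) (Y : 'I_k -> A -> nat),
      solves (R := rat) Theta i theta (fun j t => (X j t)%:R) (fun j a => (Y j a)%:R) /\
      (nonzero_unknowns Theta X Y <= m)%N /\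
      (forall j t, t \in Theta j -> (X j t <= bound)%N) /\
      (forall j a, a \in ATheta Theta -> (Y j a <= bound)%N))).
Proof.
move=> m bound.
have hM : (0 < Mphi A len)%N.
  by rewrite /Mphi !muln_gt0 hA hlen.
have hm : (0 < m)%N by rewrite /m /Gamma size_cat addn1.
have key : (exists (X : 'I_k -> ctype A len -> rat) (Y : 'I_k -> A -> rat),
      (forall j t, 0 <= X j t)%R /\ (forall j a, 0 <= Y j a)%R /\
      solves Theta i theta X Y) ->
   (exists (X : 'I_k -> ctype A len -> nat) (Y : 'I_k -> A -> nat),
      solves (R := rat) Theta i theta (fun j t => (X j t)%:R) (fun j a => (Y j a)%:R) /\
      (nonzero_unknowns Theta X Y <= m)%N /\
      (forall j t, t \in Theta j -> (X j t <= bound)%N) /\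
      (forall j a, a \in ATheta Theta -> (Y j a <= bound)%N)).
  move=> [X [Y [hX0 [hY0 hs]]]].
  pose z : Var A len k -> rat := fun v => match v with inl p => X p.1 p.2 | inr p => Y p.1 p.2 end.
  have fz : feas (Cm Theta i theta) (bm Theta) (em Theta) z.
    split; first by case => [[j t]|[j a]] /=.
    exact: (solves_iff Theta i theta (z := z) (fun _ _ => erefl) (fun _ _ => erefl)).1 hs.
  have [z' [fz' hind]] := exists_indep fz.
  have hC : forall r v, `|Cm Theta i theta r v| <= (Mphi A len)%:Z.
    by move=> r v; apply: coef_bound.
  have hb : forall r, 0 <= bm Theta r <= 1.
    by move=> r; rewrite /bm; case: (row Theta r).
  have heq : forall r, em Theta r -> bm Theta r = 0.
    by move=> r; rewrite /bm /em; case: (row Theta r).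
  have [w [s [hsm [fw [hsupp hwb]]]]] := indep_int hC hb heq fz' hind.
  exists (fun j t => w (inl (j, t))), (fun j a => w (inr (j, a))).
  split.
    apply/(solves_iff Theta i theta (z := fun v => (w v)%:R)) => //.
    exact: fw.2.
  have hB v : (w v <= bound)%N.
    apply: leq_trans (hwb v) _; exact: bound_mono.
  split; last by split => j ? _; apply: hB.
  apply: leq_trans _ (leq_trans hsupp hsm).
  have -> : #|[set v | w v != 0%N]| =
      (#|[set p : 'I_k * ctype A len | w (inl p) != 0%N]| +
       #|[set p : 'I_k * A | w (inr p) != 0%N]|)%N.
    rewrite -!sum1_card big_sumType /=.
    by congr (_ + _)%N; apply: eq_bigl => p; rewrite !inE.
  rewrite /nonzero_unknowns leq_add //; apply: subset_leq_card; apply/subsetP => p;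
  by rewrite !inE => /andP [_]; case: p.
split; split.
- move=> [X [Y hs]]; exists (fun j t => (X j t)%:R), (fun j a => (Y j a)%:R).
  by split; [move=> *; exact: ler0n | split; [move=> *; exact: ler0n | exact: hs]].
- by move=> /key [X [Y [hs _]]]; exists X, Y.
- exact: key.
- move=> [X [Y [hs _]]]; exists (fun j t => (X j t)%:R), (fun j a => (Y j a)%:R).
  by split; [move=> *; exact: ler0n | split; [move=> *; exact: ler0n | exact: hs]].
Qed.
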